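(* Let $\xi:I\to\mathbb{R}^3$ be a smooth arclength-parametrized curve with curvature $k>0$ and torsion $\tau\neq0$ on $I$, and let $t_0\in I$. Then there exists $\delta>0$ such that for every $t\in I$ with $0<|t-t_0|<\delta$, the osculating circle of $\xi$ at $\xi(t_0)$ is disjoint from the osculating plane of $\xi$ at $\xi(t)$. In particular, for such $t$ the osculating circles of $\xi$ at $\xi(t_0)$ and at $\xi(t)$ are not linked.
   Context: The osculating plane of $\xi$ at $\xi(t)$ is $\xi(t)+\operatorname{span}(\mathbf{t}(t),\mathbf{n}(t))$, where $\mathbf{t}=\xi'$ and $\mathbf{n}=\xi''/k$. The osculating circle at $\xi(t)$ is the circle in this plane with center $\xi(t)+\frac1{k(t)}\mathbf{n}(t)$ and radius $1/k(t)$. *)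

(* Defs.v *)
From Stdlib Require Import Reals Lra.
From Coquelicot Require Import Coquelicot.
Open Scope R_scope.

Definition V3 : Type := (R * R * R)%type.
Definition vx (v : V3) : R := fst (fst v).
Definition vy (v : V3) : R := snd (fst v).
Definition vz (v : V3) : R := snd v.
Definition mkV (a b c : R) : V3 := (a, b, c).

Definition vadd (u v : V3) : V3 := mkV (vx u + vx v) (vy u + vy v) (vz u + vz v).
Definition vsub (u v : V3) : V3 := mkV (vx u - vx v) (vy u - vy v) (vz u - vz v).
Definition vscal (a : R) (v : V3) : V3 := mkV (a * vx v) (a * vy v) (a * vz v).
Definition vdot (u v : V3) : R := vx u * vx v + vy u * vy v + vz u * vz v.
Definition vnorm (v : V3) : R := sqrt (vdot v v).
Definition vcross (u v : V3) : V3 :=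
  mkV (vy u * vz v - vz u * vy v)
      (vz u * vx v - vx u * vz v)
      (vx u * vy v - vy u * vx v).

Definition cderiv (n : nat) (xi : R -> V3) (t : R) : V3 :=
  mkV (Derive_n (fun s => vx (xi s)) n t)
      (Derive_n (fun s => vy (xi s)) n t)
      (Derive_n (fun s => vz (xi s)) n t).

Definition in_interval (a b : Rbar) (t : R) : Prop := Rbar_lt a t /\ Rbar_lt t b.

Definition smooth_on (I : R -> Prop) (f : R -> R) : Prop :=
  forall (n : nat) (t : R), I t -> ex_derive_n f n t.

Definition smooth_curve_on (I : R -> Prop) (xi : R -> V3) : Prop :=
  smooth_on I (fun s => vx (xi s)) /\ smooth_on I (fun s => vy (xi s)) /\
  smooth_on I (fun s => vz (xi s)).

Definition arclength_on (I : R -> Prop) (xi : R -> V3) : Prop :=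
  forall t, I t -> vnorm (cderiv 1 xi t) = 1.

Definition tangent (xi : R -> V3) (t : R) : V3 := cderiv 1 xi t.
Definition curvature (xi : R -> V3) (t : R) : R := vnorm (cderiv 2 xi t).
Definition normal (xi : R -> V3) (t : R) : V3 :=
  vscal (/ curvature xi t) (cderiv 2 xi t).
Definition binormal (xi : R -> V3) (t : R) : V3 := vcross (tangent xi t) (normal xi t).
(* torsion tau = det(xi', xi'', xi''') / k^2, equivalently b' = - tau n *)
Definition torsion (xi : R -> V3) (t : R) : R :=
  vdot (vcross (cderiv 1 xi t) (cderiv 2 xi t)) (cderiv 3 xi t) / (curvature xi t) ^ 2.

Definition osc_plane (xi : R -> V3) (t : R) (p : V3) : Prop :=
  exists a b : R,
    p = vadd (xi t) (vadd (vscal a (tangent xi t)) (vscal b (normal xi t))).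

Definition osc_center (xi : R -> V3) (t : R) : V3 :=
  vadd (xi t) (vscal (/ curvature xi t) (normal xi t)).
Definition osc_circle (xi : R -> V3) (t : R) (p : V3) : Prop :=
  osc_plane xi t p /\ vnorm (vsub p (osc_center xi t)) = / curvature xi t.

(* Main.v *)
Require Import Defs.
From Stdlib Require Import Reals Lra Psatz.
From Coquelicot Require Import Coquelicot.
Open Scope R_scope.


Lemma interval_open a b t : in_interval a b t -> locally t (in_interval a b).
Proof.
  intros [Ha Hb].
  assert (Hex: exists eps, 0 < eps /\ forall y, Rabs (y - t) < eps -> in_interval a b y).
  { destruct a as [a| |]; destruct b as [b| |]; simpl in Ha, Hb; try tauto;
    unfold in_interval; simpl.
    - exists (Rmin (t - a) (b - t)). split. apply Rmin_glb_lt; lra.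
      intros y Hy. apply Rabs_def2 in Hy. pose proof (Rmin_l (t-a) (b-t)).
      pose proof (Rmin_r (t-a) (b-t)). split; lra.
    - exists (t - a). split. lra. intros y Hy. apply Rabs_def2 in Hy. split; [lra|exact I].
    - exists (b - t). split. lra. intros y Hy. apply Rabs_def2 in Hy. split; [exact I|lra].
    - exists 1. split. lra. intros; split; exact I. }
  destruct Hex as [eps [He H]].
  exists (mkposreal eps He). intros y Hy. apply H. exact Hy.
Qed.

Lemma interval_between a b x y z : in_interval a b x -> in_interval a b y ->
  Rmin x y <= z <= Rmax x y -> in_interval a b z.
Proof.
  intros [H1 H2] [H3 H4] Hz.
  pose proof (Rmin_l x y). pose proof (Rmin_r x y).
  pose proof (Rmax_l x y). pose proof (Rmax_r x y).
  assert (Rmin x y = x \/ Rmin x y = y) as Hm by (unfold Rmin; destruct Rle_dec; auto).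
  assert (Rmax x y = x \/ Rmax x y = y) as HM by (unfold Rmax; destruct Rle_dec; auto).
  destruct a as [a| |]; destruct b as [b| |]; simpl in *; split; simpl; try tauto;
  destruct Hm as [Hm|Hm]; destruct HM as [HM|HM]; lra.
Qed.

Lemma exdn_comp g j k t : ex_derive_n g (k + j) t -> ex_derive_n (Derive_n g j) k t.
Proof.
  destruct k as [|k]; simpl. auto.
  intros H. apply ex_derive_ext with (Derive_n g (k + j)).
  intros; rewrite Derive_n_comp; reflexivity. exact H.
Qed.

Lemma taylor_two (U : R -> Prop) f n x y :
 (forall t, U t -> locally t U) ->
 (forall k t, U t -> ex_derive_n f k t) ->
 (forall z, Rmin x y <= z <= Rmax x y -> U z) -> x <> y ->
 exists zeta, Rabs (zeta - x) < Rabs (y - x) /\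
 f y = sum_f_R0 (fun m => (y-x)^m / INR (Factorial.fact m) * Derive_n f m x) n
       + (y-x)^(S n)/INR (Factorial.fact (S n)) * Derive_n f (S n) zeta.
Proof.
  intros Hop Hsm Hseg Hxy.
  destruct (Rlt_or_le x y) as [Hlt|Hle].
  - destruct (Taylor_Lagrange f n x y Hlt) as [z [Hz Heq]].
    { intros t Ht k _. apply Hsm, Hseg. rewrite Rmin_left, Rmax_right; lra. }
    exists z. split; [|exact Heq].
    rewrite !Rabs_pos_eq; lra.
  - assert (Hyx : y < x) by lra.
    set (g := fun z => f (- z)).
    assert (Hg : forall t k, Rmin x y <= - t <= Rmax x y -> ex_derive_n g k t).
    { intros t k Ht. apply ex_derive_n_comp_opp.
      eapply filter_imp; [|apply Hop, Hseg, Ht]. intros w Hw k' _. apply Hsm, Hw. }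
    destruct (Taylor_Lagrange g n (-x) (-y)) as [z [Hz Heq]]. lra.
    { intros t Ht k _. apply Hg. rewrite Rmin_right, Rmax_left; lra. }
    exists (- z). split.
    { rewrite (Rabs_left (y - x)) by lra. rewrite Rabs_left1; lra. }
    unfold g at 1 in Heq. rewrite Ropp_involutive in Heq. rewrite Heq.
    assert (HD : forall m w, Rmin x y <= w <= Rmax x y ->
               Derive_n g m (- w) = (-1)^m * Derive_n f m w).
    { intros m w Hw. unfold g. rewrite Derive_n_comp_opp, Ropp_involutive. reflexivity.
      rewrite Ropp_involutive. eapply filter_imp; [|apply Hop, Hseg, Hw].
      intros w' Hw' k' _. apply Hsm, Hw'. }
    assert (Hmm : forall m, (-y - - x)^m * (-1)^m = (y - x)^m).
    { intros m. replace (-y - - x) with ((-1) * (y - x)) by ring.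
      rewrite Rpow_mult_distr. rewrite Rmult_comm, <- Rmult_assoc, <- Rpow_mult_distr.
      replace (-1 * -1) with 1 by ring. rewrite pow1. ring. }
    f_equal.
    + apply sum_eq. intros m _. rewrite HD.
      rewrite <- (Hmm m). field. apply not_0_INR, Factorial.fact_neq_0.
      rewrite Rmin_right, Rmax_left; lra.
    + rewrite <- (Ropp_involutive z) at 1. rewrite HD.
      rewrite <- (Hmm (S n)). field. apply not_0_INR, Factorial.fact_neq_0.
      rewrite Rmin_right, Rmax_left; lra.
Qed.

Lemma loc_bound h x : continuity_pt h x ->
  exists d M, 0 < d /\ forall z, Rabs (z - x) < d -> Rabs (h z) <= M.
Proof.
  intros Hc. destruct (Hc 1 Rlt_0_1) as [alp [Ha H]].
  exists alp, (Rabs (h x) + 1). split; auto. intros z Hz.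
  destruct (Req_dec z x) as [->|Hne]. lra.
  assert (Hd : R_dist (h z) (h x) < 1).
  { apply H. split. split. exact I. auto. exact Hz. }
  unfold R_dist in Hd.
  pose proof (Rabs_triang_inv (h z) (h x)). lra.
Qed.


Lemma comp_taylor (U : R -> Prop) g t0 t M d :
 (forall t, U t -> locally t U) ->
 (forall k t, U t -> ex_derive_n g k t) ->
 (forall z, Rmin t0 t <= z <= Rmax t0 t -> U z) -> t0 <> t ->
 (forall z, Rabs (z - t0) < d -> Rabs (Derive_n g 4 z) <= M) -> Rabs (t - t0) < d ->
 exists E F G, Rabs E <= M /\ Rabs F <= M /\ Rabs G <= M /\
  g t = g t0 + (t - t0)*(Derive_n g 1 t0 + (t - t0)*(Derive_n g 2 t0/2
          + (t - t0)*(Derive_n g 3 t0/6 + (t - t0)*E))) /\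
  Derive_n g 1 t = Derive_n g 1 t0 + (t - t0)*(Derive_n g 2 t0
          + (t - t0)*(Derive_n g 3 t0/2 + (t - t0)*F)) /\
  Derive_n g 2 t = Derive_n g 2 t0 + (t - t0)*(Derive_n g 3 t0 + (t - t0)*G).
Proof.
  intros Hop Hsm Hseg Hne Hb Ht.
  assert (HM : forall z, Rabs (z - t0) < Rabs (t - t0) -> Rabs (Derive_n g 4 z) <= M).
  { intros z Hz. apply Hb. lra. }
  destruct (taylor_two U g 3 t0 t Hop Hsm Hseg Hne) as [z1 [Hz1 E1]].
  destruct (taylor_two U (Derive_n g 1) 2 t0 t Hop) as [z2 [Hz2 E2]]; auto.
  { intros k t' Ht'. apply exdn_comp. auto. }
  destruct (taylor_two U (Derive_n g 2) 1 t0 t Hop) as [z3 [Hz3 E3]]; auto.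
  { intros k t' Ht'. apply exdn_comp. auto. }
  exists (Derive_n g 4 z1 / 24), (Derive_n g 4 z2 / 6), (Derive_n g 4 z3 / 2).
  pose proof (HM _ Hz1). pose proof (HM _ Hz2). pose proof (HM _ Hz3).
  pose proof (Rabs_pos (Derive_n g 4 z1)).
  repeat split.
  - unfold Rdiv; rewrite Rabs_mult, (Rabs_pos_eq (/24)) by lra. nra.
  - unfold Rdiv; rewrite Rabs_mult, (Rabs_pos_eq (/6)) by lra.
    pose proof (Rabs_pos (Derive_n g 4 z2)). nra.
  - unfold Rdiv; rewrite Rabs_mult, (Rabs_pos_eq (/2)) by lra.
    pose proof (Rabs_pos (Derive_n g 4 z3)). nra.
  - rewrite E1. simpl. field.
  - rewrite E2. cbn [sum_f_R0]. rewrite !Derive_n_comp. simpl. field.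
  - rewrite E3. cbn [sum_f_R0]. rewrite !Derive_n_comp. simpl. field.
Qed.


Definition det (x y z : V3) : R := vdot x (vcross y z).
Definition vb (v : V3) (m : R) : Prop :=
  Rabs (vx v) <= m /\ Rabs (vy v) <= m /\ Rabs (vz v) <= m.

Lemma vb_add x y m1 m2 : vb x m1 -> vb y m2 -> vb (vadd x y) (m1 + m2).
Proof.
  intros [h1 [h2 h3]] [k1 [k2 k3]]; cbv [vb vadd mkV]; cbn [vx vy vz fst snd] in *.
  repeat split; eapply Rle_trans; try apply Rabs_triang; lra.
Qed.

Lemma vb_scal c x m : vb x m -> vb (vscal c x) (Rabs c * m).
Proof.
  intros [h1 [h2 h3]]; cbv [vb vscal mkV]; cbn [vx vy vz fst snd] in *.
  rewrite !Rabs_mult. pose proof (Rabs_pos c).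
  repeat split; apply Rmult_le_compat_l; auto.
Qed.

Lemma vb_mono x m1 m2 : vb x m1 -> m1 <= m2 -> vb x m2.
Proof. intros [h1 [h2 h3]] H; unfold vb; repeat split; lra. Qed.

Lemma prod3 x y z m : Rabs x <= m -> Rabs y <= m -> Rabs z <= m ->
  Rabs (x * y * z) <= m * m * m.
Proof.
  intros hx hy hz. rewrite !Rabs_mult.
  pose proof (Rabs_pos x). pose proof (Rabs_pos y). pose proof (Rabs_pos z).
  apply Rmult_le_compat; try nra.
Qed.

Lemma det_bound x y z m : vb x m -> vb y m -> vb z m -> Rabs (det x y z) <= 6 * (m*m*m).
Proof.
  destruct x as [[x1 x2] x3], y as [[y1 y2] y3], z as [[z1 z2] z3].
  unfold vb, det, vdot, vcross, mkV, vx, vy, vz; simpl.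
  intros [h1 [h2 h3]] [k1 [k2 k3]] [l1 [l2 l3]].
  replace (x1 * (y2 * z3 - y3 * z2) + x2 * (y3 * z1 - y1 * z3) + x3 * (y1 * z2 - y2 * z1))
   with (x1*y2*z3 + (-x1)*y3*z2 + x2*y3*z1 + (-x2)*y1*z3 + x3*y1*z2 + (-x3)*y2*z1) by ring.
  assert (Rabs (- x1) <= m) by (rewrite Rabs_Ropp; auto).
  assert (Rabs (- x2) <= m) by (rewrite Rabs_Ropp; auto).
  assert (Rabs (- x3) <= m) by (rewrite Rabs_Ropp; auto).
  pose proof (prod3 x1 y2 z3 m). pose proof (prod3 (-x1) y3 z2 m).
  pose proof (prod3 x2 y3 z1 m). pose proof (prod3 (-x2) y1 z3 m).
  pose proof (prod3 x3 y1 z2 m). pose proof (prod3 (-x3) y2 z1 m).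
  set (A := x1*y2*z3); set (B := (-x1)*y3*z2); set (C := x2*y3*z1);
  set (D := (-x2)*y1*z3); set (E := x3*y1*z2); set (F := (-x3)*y2*z1).
  pose proof (Rabs_triang (A+B+C+D+E) F). pose proof (Rabs_triang (A+B+C+D) E).
  pose proof (Rabs_triang (A+B+C) D). pose proof (Rabs_triang (A+B) C).
  pose proof (Rabs_triang A B).
  assert (Rabs A <= m*m*m) by auto. assert (Rabs B <= m*m*m) by auto.
  assert (Rabs C <= m*m*m) by auto. assert (Rabs D <= m*m*m) by auto.
  assert (Rabs E <= m*m*m) by auto. assert (Rabs F <= m*m*m) by auto.
  clearbody A B C D E F. lra.
Qed.

Lemma V3_ext u v : vx u = vx v -> vy u = vy v -> vz u = vz v -> u = v.
Proof.
  destruct u as [[u1 u2] u3], v as [[v1 v2] v3]; unfold vx, vy, vz; simpl.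
  intros -> -> ->; reflexivity.
Qed.

Lemma vdot_nonneg v : 0 <= vdot v v.
Proof. unfold vdot. nra. Qed.

Lemma uv0 a b xi t0 : smooth_curve_on (in_interval a b) xi ->
  arclength_on (in_interval a b) xi -> in_interval a b t0 ->
  vdot (cderiv 1 xi t0) (cderiv 2 xi t0) = 0.
Proof.
  intros [S1 [S2 S3]] Har Ht0.
  set (g1 := fun s => vx (xi s)). set (g2 := fun s => vy (xi s)).
  set (g3 := fun s => vz (xi s)).
  assert (VE : forall n m t, vdot (cderiv n xi t) (cderiv m xi t) =
    Derive_n g1 n t * Derive_n g1 m t + Derive_n g2 n t * Derive_n g2 m t
    + Derive_n g3 n t * Derive_n g3 m t) by reflexivity.
  set (h1 := Derive_n g1 1). set (h2 := Derive_n g2 1). set (h3 := Derive_n g3 1).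
  assert (D1 : derivable_pt_lim h1 t0 (Derive_n g1 2 t0)).
  { apply is_derive_Reals. apply Derive_correct. exact (S1 2%nat t0 Ht0). }
  assert (D2 : derivable_pt_lim h2 t0 (Derive_n g2 2 t0)).
  { apply is_derive_Reals. apply Derive_correct. exact (S2 2%nat t0 Ht0). }
  assert (D3 : derivable_pt_lim h3 t0 (Derive_n g3 2 t0)).
  { apply is_derive_Reals. apply Derive_correct. exact (S3 2%nat t0 Ht0). }
  set (phi := fun t => h1 t * h1 t + h2 t * h2 t + h3 t * h3 t).
  assert (Dp : is_derive phi t0 (2 * vdot (cderiv 1 xi t0) (cderiv 2 xi t0))).
  { apply is_derive_Reals.
    assert (H := derivable_pt_lim_plus _ _ _ _ _
      (derivable_pt_lim_plus _ _ _ _ _ (derivable_pt_lim_mult _ _ _ _ _ D1 D1)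
                                       (derivable_pt_lim_mult _ _ _ _ _ D2 D2))
      (derivable_pt_lim_mult _ _ _ _ _ D3 D3)).
    unfold phi. unfold plus_fct, mult_fct in H.
    replace (2 * vdot (cderiv 1 xi t0) (cderiv 2 xi t0)) with
      (Derive_n g1 2 t0 * h1 t0 + h1 t0 * Derive_n g1 2 t0 +
       (Derive_n g2 2 t0 * h2 t0 + h2 t0 * Derive_n g2 2 t0) +
       (Derive_n g3 2 t0 * h3 t0 + h3 t0 * Derive_n g3 2 t0)).
    exact H. rewrite VE. unfold h1, h2, h3. ring. }
  assert (Dc : is_derive phi t0 0).
  { apply is_derive_ext_loc with (fun _ => 1).
    eapply filter_imp; [|apply interval_open, Ht0].
    intros t Ht. simpl. pose proof (Har t Ht) as Hn. unfold vnorm in Hn.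
    pose proof (vdot_nonneg (cderiv 1 xi t)) as Hnn.
    pose proof (sqrt_sqrt _ Hnn) as Hs. rewrite Hn in Hs.
    unfold phi. rewrite VE in Hs. unfold h1, h2, h3. lra.
    apply (is_derive_const (K:=R_AbsRing) (1:R)).  }
  apply is_derive_unique in Dp. apply is_derive_unique in Dc. lra.
Qed.

Ltac cb := repeat match goal with x := _ : R |- _ => clearbody x end.

Lemma final_ineq (a b b' s D K RA RB RC : R) :
 b' = (a^2+b^2)/2 -> s <> 0 -> 0 < K -> Rabs s * (64*K) < Rabs D ->
 Rabs RA <= K -> Rabs RB <= K -> Rabs RC <= K ->
 a*(s^2*D/2 + s^3*RB) + b'*(-s*D + s^2*RC) - (s^3*D/6 + s^4*RA) <> 0.
Proof.
  intros Hb Hs HK HsD HA HB HC Heq.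
  set (sg := Rabs s). set (al := Rabs a). set (dd := Rabs D).
  assert (Hsg : 0 < sg) by (apply Rabs_pos_lt; auto).
  assert (Hal : 0 <= al) by apply Rabs_pos.
  assert (Hs2 : sg*sg = s*s) by (unfold sg; rewrite <- Rabs_mult; apply Rabs_pos_eq; (cb; nra)).
  assert (Ha2 : al*al = a*a) by (unfold al; rewrite <- Rabs_mult; apply Rabs_pos_eq; (cb; nra)).
  set (q := a^2 + b^2 - a*s + s^2/3).
  set (Q := a^2 + b^2 + s^2).
  assert (0 < s*s) by (cb; nra).
  assert (HQ : 0 < Q) by (unfold Q; (cb; nra)).
  assert (Hq : Q/16 <= q) by (unfold q, Q; pose proof (pow2_ge_0 (a - 8/15*s)); pose proof (pow2_ge_0 b); pose proof (pow2_ge_0 s); cb; nra).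
  set (L := a*(s^2*D/2) + b'*(-s*D) - s^3*D/6).
  set (Er := a*s^3*RB + b'*s^2*RC - s^4*RA).
  assert (HL : L = -(D*s*/2)*q) by (unfold L, q; rewrite Hb; field).
  assert (Hsum : L + Er = 0) by (rewrite <- Heq; unfold L, Er; ring).
  assert (HRL : Rabs L = dd * sg * /2 * q).
  { rewrite HL, Rabs_mult, Rabs_Ropp, !Rabs_mult, (Rabs_pos_eq (/2)) by (cb; lra).
    rewrite (Rabs_pos_eq q) by (cb; lra). reflexivity. }
  assert (Hb0 : 0 <= b') by (rewrite Hb; (cb; nra)).
  assert (HRE : Rabs Er <= al*sg^3*K + b'*sg^2*K + sg^4*K).
  { unfold Er.
    pose proof (Rabs_triang (a*s^3*RB + b'*s^2*RC) (- (s^4*RA))) as T1.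
    pose proof (Rabs_triang (a*s^3*RB) (b'*s^2*RC)) as T2.
    rewrite Rabs_Ropp in T1. unfold Rminus.
    rewrite !Rabs_mult, <- !RPow_abs in T1. rewrite !Rabs_mult, <- !RPow_abs, (Rabs_pos_eq b') in T2 by (cb; lra).
    fold sg al in T1, T2.
    assert (0 <= sg^3) by (apply pow_le; lra).
    assert (0 <= sg^2) by (apply pow_le; lra).
    assert (0 <= sg^4) by (apply pow_le; lra).
    assert (al*sg^3*Rabs RB <= al*sg^3*K) by (apply Rmult_le_compat_l; (cb; nra)).
    assert (b'*sg^2*Rabs RC <= b'*sg^2*K) by (apply Rmult_le_compat_l; (cb; nra)).
    assert (sg^4*Rabs RA <= sg^4*K) by (apply Rmult_le_compat_l; (cb; nra)).
    (cb; lra). }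
  assert (Hasg : al*sg <= (a*a + s*s)/2) by (pose proof (pow2_ge_0 (al - sg)); cb; nra).
  assert (HE2 : Rabs Er <= K * (sg*sg) * (2*Q)).
  { assert (al*sg^3*K + b'*sg^2*K + sg^4*K = K*(sg*sg)*(al*sg + b' + s*s)) by
      (rewrite <- Hs2; ring).
    assert (al*sg + b' + s*s <= 2*Q) by (unfold Q; rewrite Hb; (cb; nra)).
    assert (0 <= K*(sg*sg)) by (cb; nra). (cb; nra). }
  assert (HLE : Rabs L = Rabs Er) by (replace Er with (-L) by lra; rewrite Rabs_Ropp; auto).
  assert (dd * sg * Q / 32 <= Rabs L).
  { rewrite HRL. assert (0 <= dd*sg) by (unfold dd; pose proof (Rabs_pos D); (cb; nra)). (cb; nra). }
  assert (K * (sg*sg) * (2*Q) < dd*sg*Q/32).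
  { fold sg dd in HsD. assert (0 < sg*Q) by (cb; nra). (cb; nra). }
  (cb; lra).
Qed.


Definition Yp w0 e s := vadd (vscal (/6) w0) (vscal s e).
Definition Yv v0 w0 e s := vadd (vscal (/2) v0) (vscal s (Yp w0 e s)).
Definition Zp w0 f s := vadd (vscal (/2) w0) (vscal s f).
Definition Zv v0 w0 f s := vadd v0 (vscal s (Zp w0 f s)).
Definition Wv w0 g s := vadd w0 (vscal s g).
Definition Vv v0 w0 g s := vadd v0 (vscal s (Wv w0 g s)).
Definition Uv u0 v0 w0 f s := vadd u0 (vscal s (Zv v0 w0 f s)).
Definition Xv x0 u0 v0 w0 e s := vadd x0 (vscal s (vadd u0 (vscal s (Yv v0 w0 e s)))).
Definition RBf u0 v0 w0 f g s := det u0 v0 g + det u0 f v0 + det u0 (Zp w0 f s) (Wv w0 g s).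
Definition RCf u0 v0 w0 f g s := det v0 u0 g + det v0 (Zv v0 w0 f s) (Wv w0 g s).
Definition RAf u0 v0 w0 e f g s := RBf u0 v0 w0 f g s + det (vscal (/2) v0) u0 g + det e u0 v0
   + det (Yp w0 e s) u0 (Wv w0 g s)
   + det (Yv v0 w0 e s) (vsub (Zp w0 f s) (vscal 2 (Yp w0 e s))) (Vv v0 w0 g s).

Lemma key_identity (x0 u0 v0 w0 e f g : V3) (s a b' : R) :
 vdot (vsub (vadd x0 (vadd (vscal a u0) (vscal b' v0))) (Xv x0 u0 v0 w0 e s))
      (vcross (Uv u0 v0 w0 f s) (Vv v0 w0 g s))
 = a*(s^2*(vdot (vcross u0 v0) w0)/2 + s^3*RBf u0 v0 w0 f g s)
   + b'*(-s*(vdot (vcross u0 v0) w0) + s^2*RCf u0 v0 w0 f g s)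
   - (s^3*(vdot (vcross u0 v0) w0)/6 + s^4*RAf u0 v0 w0 e f g s).
Proof.
  destruct x0 as [[x1 x2] x3], u0 as [[u1 u2] u3], v0 as [[v1 v2] v3],
    w0 as [[w1 w2] w3], e as [[e1 e2] e3], f as [[f1 f2] f3], g as [[g1 g2] g3].
  cbv [RAf RBf RCf Yp Yv Zp Zv Wv Vv Uv Xv det vdot vcross vadd vsub vscal mkV vx vy vz fst snd].
  field.
Qed.

Lemma vb_sub x y m1 m2 : vb x m1 -> vb y m2 -> vb (vsub x y) (m1 + m2).
Proof.
  intros [h1 [h2 h3]] [k1 [k2 k3]]; cbv [vb vsub mkV]; cbn [vx vy vz fst snd] in *.
  repeat split; unfold Rminus; eapply Rle_trans; try apply Rabs_triang;
  rewrite Rabs_Ropp; lra.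
Qed.

Lemma vb_comb c d x y m : vb x m -> vb y m -> Rabs c <= 1 -> Rabs d <= 1 -> 0 <= m ->
  vb (vadd (vscal c x) (vscal d y)) (2*m).
Proof.
  intros hx hy hc hd hm. eapply vb_mono. apply vb_add; apply vb_scal; eauto.
  pose proof (Rabs_pos c). pose proof (Rabs_pos d). nra.
Qed.

Lemma vb_comb1 d x y m : vb x m -> vb y m -> Rabs d <= 1 -> 0 <= m ->
  vb (vadd x (vscal d y)) (2*m).
Proof.
  intros hx hy hd hm. eapply vb_mono. apply vb_add; [apply hx| apply vb_scal; eauto].
  pose proof (Rabs_pos d). nra.
Qed.

Lemma R_bounds u0 v0 w0 e f g s m : vb u0 m -> vb v0 m -> vb w0 m -> vb e m ->
  vb f m -> vb g m -> Rabs s <= 1 -> 0 <= m ->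
  Rabs (RBf u0 v0 w0 f g s) <= 7 * (6*((6*m)*(6*m)*(6*m))) /\
  Rabs (RCf u0 v0 w0 f g s) <= 7 * (6*((6*m)*(6*m)*(6*m))) /\
  Rabs (RAf u0 v0 w0 e f g s) <= 7 * (6*((6*m)*(6*m)*(6*m))).
Proof.
  intros hu hv hw he hf hg hs hm.
  assert (h6 : Rabs (/6) <= 1) by (rewrite Rabs_pos_eq; lra).
  assert (h2 : Rabs (/2) <= 1) by (rewrite Rabs_pos_eq; lra).
  assert (M6 : forall x k, vb x (k*m) -> 0 <= k <= 6 -> vb x (6*m)).
  { intros x k H Hk. eapply vb_mono; [exact H|]. nra. }
  assert (B1 : forall x, vb x m -> vb x (6*m)) by (intros x H; apply (M6 x 1); [rewrite Rmult_1_l; auto| lra]).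
  assert (HYp : vb (Yp w0 e s) (2*m)) by (apply vb_comb; auto).
  assert (HZp : vb (Zp w0 f s) (2*m)) by (apply vb_comb; auto).
  assert (HWv : vb (Wv w0 g s) (2*m)) by (apply vb_comb1; auto).
  assert (HYv : vb (Yv v0 w0 e s) (2*(2*m))).
  { apply vb_comb; auto. eapply vb_mono; [exact hv| lra]. lra. }
  assert (HZv : vb (Zv v0 w0 f s) (2*(2*m))).
  { apply vb_comb1; auto. eapply vb_mono; [exact hv| lra]. lra. }
  assert (HVv : vb (Vv v0 w0 g s) (2*(2*m))).
  { apply vb_comb1; auto. eapply vb_mono; [exact hv| lra]. lra. }
  assert (Hv2 : vb (vscal (/2) v0) (6*m)).
  { eapply vb_mono. apply vb_scal, hv. nra. }
  assert (Hsb : vb (vsub (Zp w0 f s) (vscal 2 (Yp w0 e s))) (6*m)).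
  { eapply vb_mono. apply vb_sub. exact HZp. apply vb_scal, HYp.
    rewrite Rabs_pos_eq by lra. lra. }
  assert (C : forall x y z, vb x (6*m) -> vb y (6*m) -> vb z (6*m) ->
     Rabs (det x y z) <= 6*((6*m)*(6*m)*(6*m))) by (intros; apply det_bound; auto).
  assert (c0 : 0 <= 6*((6*m)*(6*m)*(6*m))) by (assert (0 <= 6*m) by lra; nra).
  assert (W6 : forall x, vb x (2*m) -> vb x (6*m)) by (intros; eapply vb_mono; eauto; lra).
  assert (W6' : forall x, vb x (2*(2*m)) -> vb x (6*m)) by (intros; eapply vb_mono; eauto; lra).
  set (c := 6*((6*m)*(6*m)*(6*m))) in *.
  assert (RB : Rabs (RBf u0 v0 w0 f g s) <= 3*c).
  { unfold RBf.
    pose proof (C u0 v0 g (B1 _ hu) (B1 _ hv) (B1 _ hg)).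
    pose proof (C u0 f v0 (B1 _ hu) (B1 _ hf) (B1 _ hv)).
    pose proof (C u0 _ _ (B1 _ hu) (W6 _ HZp) (W6 _ HWv)).
    pose proof (Rabs_triang (det u0 v0 g + det u0 f v0) (det u0 (Zp w0 f s) (Wv w0 g s))).
    pose proof (Rabs_triang (det u0 v0 g) (det u0 f v0)). lra. }
  split; [lra|]. split.
  { unfold RCf.
    pose proof (C v0 u0 g (B1 _ hv) (B1 _ hu) (B1 _ hg)).
    pose proof (C v0 _ _ (B1 _ hv) (W6' _ HZv) (W6 _ HWv)).
    pose proof (Rabs_triang (det v0 u0 g) (det v0 (Zv v0 w0 f s) (Wv w0 g s))). lra. }
  unfold RAf.
  pose proof (C _ u0 g Hv2 (B1 _ hu) (B1 _ hg)).
  pose proof (C e u0 v0 (B1 _ he) (B1 _ hu) (B1 _ hv)).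
  pose proof (C _ u0 _ (W6 _ HYp) (B1 _ hu) (W6 _ HWv)).
  pose proof (C _ _ _ (W6' _ HYv) Hsb (W6' _ HVv)).
  set (d1 := det (vscal (/2) v0) u0 g) in *. set (d2 := det e u0 v0) in *.
  set (d3 := det (Yp w0 e s) u0 (Wv w0 g s)) in *.
  set (d4 := det (Yv v0 w0 e s) (vsub (Zp w0 f s) (vscal 2 (Yp w0 e s))) (Vv v0 w0 g s)) in *.
  set (rb := RBf u0 v0 w0 f g s) in *.
  pose proof (Rabs_triang (rb + d1 + d2 + d3) d4).
  pose proof (Rabs_triang (rb + d1 + d2) d3).
  pose proof (Rabs_triang (rb + d1) d2).
  pose proof (Rabs_triang rb d1). lra.
Qed.


Lemma plane_zero x u v al be c :
  vdot (vsub (vadd x (vadd (vscal al u) (vscal be (vscal c v)))) x) (vcross u v) = 0.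
Proof.
  destruct x as [[x1 x2] x3], u as [[u1 u2] u3], v as [[v1 v2] v3].
  cbv [vdot vcross vadd vsub vscal mkV vx vy vz fst snd]. ring.
Qed.

Lemma circ_expand x u v al be c :
  let w := vsub (vadd x (vadd (vscal al u) (vscal be (vscal c v)))) (vadd x (vscal c (vscal c v))) in
  vdot w w = al^2 * vdot u u + 2*al*(be*c - c*c) * vdot u v + (be*c - c*c)^2 * vdot v v.
Proof.
  destruct x as [[x1 x2] x3], u as [[u1 u2] u3], v as [[v1 v2] v3].
  cbv [vdot vcross vadd vsub vscal mkV vx vy vz fst snd]. ring.
Qed.

Lemma dot_of_norm v r : vnorm v = r -> vdot v v = r^2.
Proof.
  intros H. unfold vnorm in H. rewrite <- H. simpl. rewrite Rmult_1_r.
  rewrite sqrt_sqrt; auto. apply vdot_nonneg.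
Qed.

Theorem mainTheorem10 (a b : Rbar) (xi : R -> V3) (t0 : R) :
  smooth_curve_on (in_interval a b) xi ->
  arclength_on (in_interval a b) xi ->
  (forall t, in_interval a b t -> 0 < curvature xi t) ->
  (forall t, in_interval a b t -> torsion xi t <> 0) ->
  in_interval a b t0 ->
  exists delta : R, 0 < delta /\
    forall t : R, in_interval a b t -> 0 < Rabs (t - t0) < delta ->
      forall p : V3, osc_circle xi t0 p -> ~ osc_plane xi t p.
Proof.
  intros Hsm Har Hk Htau Ht0.
  pose proof (uv0 a b xi t0 Hsm Har Ht0) as Huv.
  destruct Hsm as [S1 [S2 S3]].
  set (g1 := fun s => vx (xi s)) in *. set (g2 := fun s => vy (xi s)) in *.
  set (g3 := fun s => vz (xi s)) in *.
  assert (C1 : continuity_pt (Derive_n g1 4) t0).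
  { apply continuity_pt_filterlim. apply (ex_derive_continuous (Derive_n g1 4)). exact (S1 5%nat t0 Ht0). }
  assert (C2 : continuity_pt (Derive_n g2 4) t0).
  { apply continuity_pt_filterlim. apply (ex_derive_continuous (Derive_n g2 4)). exact (S2 5%nat t0 Ht0). }
  assert (C3 : continuity_pt (Derive_n g3 4) t0).
  { apply continuity_pt_filterlim. apply (ex_derive_continuous (Derive_n g3 4)). exact (S3 5%nat t0 Ht0). }
  destruct (loc_bound _ _ C1) as [d1 [M1 [Hd1 HM1]]].
  destruct (loc_bound _ _ C2) as [d2 [M2 [Hd2 HM2]]].
  destruct (loc_bound _ _ C3) as [d3 [M3 [Hd3 HM3]]].
  set (d := Rmin d1 (Rmin d2 d3)).
  assert (Hd : 0 < d) by (unfold d; repeat apply Rmin_glb_lt; auto).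
  assert (Hdd : forall z, Rabs (z - t0) < d -> Rabs (z - t0) < d1 /\ Rabs (z - t0) < d2 /\ Rabs (z - t0) < d3).
  { intros z Hz. unfold d in Hz. pose proof (Rmin_l d1 (Rmin d2 d3)).
    pose proof (Rmin_r d1 (Rmin d2 d3)). pose proof (Rmin_l d2 d3). pose proof (Rmin_r d2 d3). lra. }
  set (M := Rabs M1 + Rabs M2 + Rabs M3).
  assert (HM : forall z, Rabs (z - t0) < d ->
     Rabs (Derive_n g1 4 z) <= M /\ Rabs (Derive_n g2 4 z) <= M /\ Rabs (Derive_n g3 4 z) <= M).
  { intros z Hz. destruct (Hdd z Hz) as [z1 [z2 z3]].
    pose proof (HM1 z z1). pose proof (HM2 z z2). pose proof (HM3 z z3).
    pose proof (Rle_abs M1). pose proof (Rle_abs M2). pose proof (Rle_abs M3).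
    pose proof (Rabs_pos M1). pose proof (Rabs_pos M2). pose proof (Rabs_pos M3).
    unfold M. lra. }
  set (u0 := cderiv 1 xi t0). set (v0 := cderiv 2 xi t0). set (w0 := cderiv 3 xi t0).
  set (k0 := curvature xi t0).
  assert (Hk0 : 0 < k0) by (apply Hk; auto).
  set (D := vdot (vcross u0 v0) w0).
  assert (HD : D <> 0).
  { intros HD0. apply (Htau t0 Ht0). unfold torsion. fold u0 v0 w0. fold D. rewrite HD0. unfold Rdiv. ring. }
  assert (Huu : vdot u0 u0 = 1) by (pose proof (dot_of_norm _ 1 (Har t0 Ht0)) as HH; fold u0 in HH; rewrite HH; ring).
  assert (Hvv : vdot v0 v0 = k0^2) by (apply dot_of_norm; reflexivity).
  fold u0 v0 in Huv.
  set (m := M + 1 + (Rabs (vx u0) + Rabs (vy u0) + Rabs (vz u0)) + (Rabs (vx v0) + Rabs (vy v0) + Rabs (vz v0))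
             + (Rabs (vx w0) + Rabs (vy w0) + Rabs (vz w0))).
  assert (HMm : 0 <= M) by (unfold M; pose proof (Rabs_pos M1); pose proof (Rabs_pos M2); pose proof (Rabs_pos M3); lra).
  assert (Hmpos : forall x, 0 <= x -> x <= x + (M + 1)) by (intros; lra).
  pose proof (Rabs_pos (vx u0)). pose proof (Rabs_pos (vy u0)). pose proof (Rabs_pos (vz u0)).
  pose proof (Rabs_pos (vx v0)). pose proof (Rabs_pos (vy v0)). pose proof (Rabs_pos (vz v0)).
  pose proof (Rabs_pos (vx w0)). pose proof (Rabs_pos (vy w0)). pose proof (Rabs_pos (vz w0)).
  assert (Hm0 : 0 <= m) by (unfold m; lra).
  assert (Vu : vb u0 m) by (unfold vb, m; lra).
  assert (Vv0 : vb v0 m) by (unfold vb, m; lra).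
  assert (Vw : vb w0 m) by (unfold vb, m; lra).
  assert (HMm2 : M <= m) by (unfold m; lra).
  set (K := 7 * (6*((6*m)*(6*m)*(6*m))) + 1).
  assert (HK : 0 < K) by (unfold K; assert (0 <= 6*m) by lra; assert (0 <= (6*m)*(6*m)) by nra; nra).
  exists (Rmin d (Rmin 1 (Rabs D / (64*K)))).
  split.
  { apply Rmin_glb_lt; [exact Hd|]. apply Rmin_glb_lt; [lra|]. apply Rdiv_lt_0_compat; [apply Rabs_pos_lt; exact HD| lra]. }
  intros t Ht [Hs0 Hsd] p [[al [be Hp]] Hcirc] [al' [be' Hp']].
  assert (Hsd1 : Rabs (t - t0) < d) by (eapply Rlt_le_trans; [exact Hsd| apply Rmin_l]).
  assert (Hsd2 : Rabs (t - t0) < 1).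
  { eapply Rlt_le_trans; [exact Hsd|]. eapply Rle_trans; [apply Rmin_r| apply Rmin_l]. }
  assert (Hsd3 : Rabs (t - t0) < Rabs D / (64*K)).
  { eapply Rlt_le_trans; [exact Hsd|]. eapply Rle_trans; [apply Rmin_r| apply Rmin_r]. }
  assert (Hne : t0 <> t) by (intros ->; rewrite Rminus_diag, Rabs_R0 in Hs0; lra).
  assert (Hseg : forall z, Rmin t0 t <= z <= Rmax t0 t -> in_interval a b z)
    by (intros z Hz; exact (interval_between a b t0 t z Ht0 Ht Hz)).
  destruct (comp_taylor (in_interval a b) g1 t0 t M d (@interval_open a b) S1 Hseg Hne
     (fun z Hz => proj1 (HM z Hz)) Hsd1) as [E1 [F1 [G1 [hE1 [hF1 [hG1 [X1 [U1 V1]]]]]]]].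
  destruct (comp_taylor (in_interval a b) g2 t0 t M d (@interval_open a b) S2 Hseg Hne
     (fun z Hz => proj1 (proj2 (HM z Hz))) Hsd1) as [E2 [F2 [G2 [hE2 [hF2 [hG2 [X2 [U2 V2]]]]]]]].
  destruct (comp_taylor (in_interval a b) g3 t0 t M d (@interval_open a b) S3 Hseg Hne
     (fun z Hz => proj2 (proj2 (HM z Hz))) Hsd1) as [E3 [F3 [G3 [hE3 [hF3 [hG3 [X3 [U3 V3]]]]]]]].
  set (s := t - t0) in *.
  set (e := mkV E1 E2 E3). set (f := mkV F1 F2 F3). set (gg := mkV G1 G2 G3).
  assert (Ve : vb e m) by (unfold vb, e; cbn; lra).
  assert (Vf : vb f m) by (unfold vb, f; cbn; lra).
  assert (Vg : vb gg m) by (unfold vb, gg; cbn; lra).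
  assert (HX : xi t = Xv (xi t0) u0 v0 w0 e s).
  { apply V3_ext; cbv [Xv Yv Yp vadd vscal mkV e]; cbn [vx vy vz fst snd].
    - change (vx (xi t)) with (g1 t). rewrite X1. unfold g1, u0, v0, w0, cderiv; cbv [mkV]; cbn [vx vy vz fst snd]. field.
    - change (vy (xi t)) with (g2 t). rewrite X2. unfold g2, u0, v0, w0, cderiv; cbv [mkV]; cbn [vx vy vz fst snd]. field.
    - change (vz (xi t)) with (g3 t). rewrite X3. unfold g3, u0, v0, w0, cderiv; cbv [mkV]; cbn [vx vy vz fst snd]. field. }
  assert (HU : cderiv 1 xi t = Uv u0 v0 w0 f s).
  { apply V3_ext; cbv [Uv Zv Zp vadd vscal mkV f]; cbn [vx vy vz fst snd].
    - change (vx (cderiv 1 xi t)) with (Derive_n g1 1 t). rewrite U1. unfold g1, u0, v0, w0, cderiv; cbv [mkV]; cbn [vx vy vz fst snd]. field.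
    - change (vy (cderiv 1 xi t)) with (Derive_n g2 1 t). rewrite U2. unfold g2, u0, v0, w0, cderiv; cbv [mkV]; cbn [vx vy vz fst snd]. field.
    - change (vz (cderiv 1 xi t)) with (Derive_n g3 1 t). rewrite U3. unfold g3, u0, v0, w0, cderiv; cbv [mkV]; cbn [vx vy vz fst snd]. field. }
  assert (HV : cderiv 2 xi t = Vv v0 w0 gg s).
  { apply V3_ext; cbv [Vv Wv vadd vscal mkV gg]; cbn [vx vy vz fst snd].
    - change (vx (cderiv 2 xi t)) with (Derive_n g1 2 t). rewrite V1. unfold g1, u0, v0, w0, cderiv; cbv [mkV]; cbn [vx vy vz fst snd]. ring.
    - change (vy (cderiv 2 xi t)) with (Derive_n g2 2 t). rewrite V2. unfold g2, u0, v0, w0, cderiv; cbv [mkV]; cbn [vx vy vz fst snd]. ring.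
    - change (vz (cderiv 2 xi t)) with (Derive_n g3 2 t). rewrite V3. unfold g3, u0, v0, w0, cderiv; cbv [mkV]; cbn [vx vy vz fst snd]. ring. }
  assert (F0 : vdot (vsub p (xi t)) (vcross (cderiv 1 xi t) (cderiv 2 xi t)) = 0).
  { rewrite Hp'. apply plane_zero. }
  assert (Hpe : p = vadd (xi t0) (vadd (vscal al u0) (vscal (be / k0) v0))).
  { rewrite Hp. apply V3_ext; cbv [tangent normal vadd vscal mkV]; cbn [vx vy vz fst snd];
    fold u0 v0 k0; unfold Rdiv; ring. }
  rewrite Hpe, HX, HU, HV, key_identity in F0. fold D in F0.
  assert (Hbe : be / k0 = (al^2 + be^2)/2).
  { apply dot_of_norm in Hcirc. unfold osc_center, normal in Hcirc. fold v0 k0 in Hcirc.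
    rewrite Hp in Hcirc. unfold tangent, normal in Hcirc. fold u0 v0 k0 in Hcirc.
    rewrite circ_expand in Hcirc. rewrite Huu, Huv, Hvv in Hcirc.
    assert (EE : (be * / k0 - / k0 * / k0) ^ 2 * k0 ^ 2 = be^2 - 2*be*/k0 + /k0^2) by (field; lra).
    assert (EE2 : (/k0)^2 = /k0^2) by (field; lra).
    rewrite EE, EE2 in Hcirc. unfold Rdiv. lra. }
  destruct (R_bounds u0 v0 w0 e f gg s m Vu Vv0 Vw Ve Vf Vg ltac:(lra) Hm0) as [RB [RC RA]].
  eapply (final_ineq al be (be/k0) s D K); [exact Hbe | | exact HK | | | | | exact F0].
  - intros Hs00. rewrite Hs00, Rabs_R0 in Hs0. lra.
  - apply (Rmult_lt_compat_r (64*K)) in Hsd3; [|lra].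
    unfold Rdiv in Hsd3. rewrite Rmult_assoc, Rinv_l, Rmult_1_r in Hsd3; lra.
  - unfold K; lra.
  - unfold K; lra.
  - unfold K; lra.
Qed.
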